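(* Let $\mathfrak{C}\in\{c,B\}$. (a) There is a family of size $2^{\aleph_0}$ of pairs $(X,A)$, $X$ Polish and $A$ a $\Sigma^0_2$ digraph on $X$ of uncountable Borel chromatic number, which is a $\preceq^{inj}_{\mathfrak{C}}$-antichain (pairwise incomparable). (b) There is a sequence $(X_n,A_n)_{n\in\omega}$ of such pairs ($\Sigma^0_2$ digraphs on Polish spaces of uncountable Borel chromatic number) with $(X_n,A_n)\preceq^{inj}_{\mathfrak{C}}(X_{n+1},A_{n+1})$ and $(X_{n+1},A_{n+1})\not\preceq^{inj}_{\mathfrak{C}}(X_n,A_n)$ for every $n$.
   Context: A digraph on $X$ is a relation $A\subseteq X^2$ disjoint from the diagonal. For relations $A$ on $X$, $B$ on $Y$ (Polish), $(X,A)\preceq^{inj}_c(Y,B)$ (resp. $\preceq^{inj}_B$) means there is an injective continuous (resp. Borel) $h:X\to Y$ with $A\subseteq(h\times h)^{-1}(B)$. The Borel chromatic number of a digraph $A$ on Polish $X$ is the least cardinality of a Polish $Y$ admitting a Borel $c:X\to Y$ with $c(x)\neq c(x')$ for $(x,x')\in A$. *)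

(* Defs.v *)
From Stdlib Require Import Reals.
Open Scope R_scope.

Record Polish := {
  pcarrier :> Type;
  pdist : pcarrier -> pcarrier -> R;
  pdist_nonneg : forall x y, 0 <= pdist x y;
  pdist_eq0 : forall x y, pdist x y = 0 <-> x = y;
  pdist_sym : forall x y, pdist x y = pdist y x;
  pdist_tri : forall x y z, pdist x z <= pdist x y + pdist y z;
  pcomplete : forall u : nat -> pcarrier,
      (forall eps, 0 < eps -> exists N, forall n m, (n >= N)%nat -> (m >= N)%nat ->
          pdist (u n) (u m) < eps) ->
      exists l, forall eps, 0 < eps -> exists N, forall n, (n >= N)%nat -> pdist (u n) l < eps;
  (* countable dense subset (possibly empty, via option) *)
  pseparable : exists D : nat -> option pcarrier,
      forall x eps, 0 < eps -> exists n y, D n = Some y /\ pdist x y < eps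
}.

Definition is_open {X : Polish} (U : X -> Prop) : Prop :=
  forall x, U x -> exists eps, 0 < eps /\ forall y, pdist X x y < eps -> U y.

Definition is_open2 {X : Polish} (U : X -> X -> Prop) : Prop :=
  forall x1 x2, U x1 x2 -> exists eps, 0 < eps /\
    forall y1 y2, pdist X x1 y1 < eps -> pdist X x2 y2 < eps -> U y1 y2.

Definition is_closed2 {X : Polish} (F : X -> X -> Prop) : Prop :=
  is_open2 (fun a b => ~ F a b).

Definition Sigma02_2 {X : Polish} (A : X -> X -> Prop) : Prop :=
  exists F : nat -> X -> X -> Prop, (forall n, is_closed2 (F n)) /\
    forall a b, A a b <-> exists n, F n a b.

Inductive borel (X : Polish) : (X -> Prop) -> Prop :=
  | borel_open : forall U, is_open U -> borel X U
  | borel_compl : forall U, borel X U -> borel X (fun x => ~ U x)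
  | borel_cunion : forall U : nat -> X -> Prop, (forall n, borel X (U n)) ->
      borel X (fun x => exists n, U n x)
  | borel_ext : forall U V, borel X U -> (forall x, U x <-> V x) -> borel X V.

Definition continuous {X Y : Polish} (f : X -> Y) : Prop :=
  forall U : Y -> Prop, is_open U -> is_open (fun x => U (f x)).

Definition borel_fun {X Y : Polish} (f : X -> Y) : Prop :=
  forall U : Y -> Prop, is_open U -> borel X (fun x => U (f x)).

Definition injective {X Y : Type} (f : X -> Y) : Prop :=
  forall x y, f x = f y -> x = y.

Definition countable_type (Y : Type) : Prop := exists f : Y -> nat, injective f.

Record PRel := { prX : Polish; prA : prX -> prX -> Prop }.

Definition is_digraph (P : PRel) : Prop := forall x, ~ prA P x x.

Definition uncountable_borel_chromatic (P : PRel) : Prop :=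
  forall (Y : Polish) (c : prX P -> Y), countable_type Y -> borel_fun c ->
    exists x x', prA P x x' /\ c x = c x'.

Inductive redmode := RedCont | RedBorel.

Definition inj_reduces (m : redmode) (P Q : PRel) : Prop :=
  exists h : prX P -> prX Q, injective h /\
    (match m with RedCont => continuous h | RedBorel => borel_fun h end) /\
    forall x x', prA P x x' -> prA Q (h x) (h x').

Definition good (P : PRel) : Prop :=
  is_digraph P /\ Sigma02_2 (prA P) /\ uncountable_borel_chromatic P.

(* Main.v *)
Require Import Defs.
From Stdlib Require Import Reals.
From Stdlib Require Import Lra Lia Classical ClassicalEpsilon FunctionalExtensionality.
From Stdlib Require Cantor.
Open Scope R_scope.

Lemma IZR_split (z : Z) : exists p q : nat, IZR z = INR p - INR q.
Proof.
  exists (Z.to_nat z), (Z.to_nat (- z)).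
  rewrite !INR_IZR_INZ, <- minus_IZR. f_equal. lia.
Qed.

Lemma R_dense (x eps : R) : 0 < eps ->
  exists a p q : nat, Rabs (x - (INR p - INR q) / INR (S a)) < eps.
Proof.
  intros He. destruct (archimed_cor1 eps He) as [N [HN HN0]].
  destruct N as [|a]; [lia|].
  set (r := x * INR (S a)).
  destruct (archimed r) as [H1 H2].
  destruct (IZR_split (up r)) as [p [q Hpq]].
  exists a, p, q. rewrite <- Hpq.
  assert (Hpos : 0 < INR (S a)) by (apply lt_0_INR; lia).
  assert (E : x - IZR (up r) / INR (S a) = (r - IZR (up r)) / INR (S a)).
  { unfold r. field. lra. }
  rewrite E. unfold Rdiv. rewrite Rabs_mult, Rabs_inv, (Rabs_right (INR (S a))) by lra.
  apply Rle_lt_trans with (1 * / INR (S a)); [|lra].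
  apply Rmult_le_compat_r. left; apply Rinv_0_lt_compat; lra.
  apply Rabs_le. lra.
Qed.

Definition RD (n : nat) : option R :=
  let (a, r) := Cantor.of_nat n in let (p, q) := Cantor.of_nat r in
  Some ((INR p - INR q) / INR (S a)).

Definition RP : Polish.
Proof.
  refine {| pcarrier := R; pdist := fun x y => Rabs (x - y) |}.
  - intros; apply Rabs_pos.
  - intros x y; split; intro H.
    + destruct (Req_dec (x - y) 0) as [E|E]; [lra|].
      apply Rabs_no_R0 in E; contradiction.
    + subst; rewrite Rminus_diag, Rabs_R0; reflexivity.
  - intros; apply Rabs_minus_sym.
  - intros x y z. replace (x - z) with ((x - y) + (y - z)) by ring. apply Rabs_triang.
  - intros u Hu. destruct (R_complete u) as [l Hl].
    + intros eps He. apply Hu; lra.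
    + exists l. intros eps He. exact (Hl eps He).
  - exists RD. intros x eps He. destruct (R_dense x eps He) as [a [p [q H]]].
    exists (Cantor.to_nat (a, Cantor.to_nat (p, q))), ((INR p - INR q) / INR (S a)).
    unfold RD. rewrite !Cantor.cancel_of_to. split; [reflexivity| exact H].
Defined.

Definition code (k j : nat) : nat := (k * k + j)%nat.
Definition q (k j : nat) : R := - INR (code k j) - 1.
Definition cyc (P : nat -> Prop) (x y : R) : Prop :=
  exists k j, P k /\ (2 <= k)%nat /\ (j < k)%nat /\ x = q k j /\ y = q k ((S j) mod k).
Definition Arel (P : nat -> Prop) (x y : R) : Prop := (0 <= x /\ x < y) \/ cyc P x y.
Definition PR (P : nat -> Prop) : PRel := {| prX := RP; prA := Arel P |}.

Lemma code_inj k j k' j' : (j < k)%nat -> (j' < k')%nat -> code k j = code k' j' -> k = k' /\ j = j'.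
Proof.
  unfold code; intros H1 H2 E.
  destruct (Nat.lt_trichotomy k k') as [L|[L|L]].
  - exfalso. assert (S k * S k <= k' * k')%nat by (apply Nat.mul_le_mono; lia). nia.
  - subst; lia.
  - exfalso. assert (S k' * S k' <= k * k)%nat by (apply Nat.mul_le_mono; lia). nia.
Qed.

Lemma q_inj k j k' j' : (j < k)%nat -> (j' < k')%nat -> q k j = q k' j' -> k = k' /\ j = j'.
Proof.
  intros H1 H2 E. apply code_inj; auto. apply INR_eq. unfold q in E. lra.
Qed.

Lemma q_neg k j : q k j < 0.
Proof. unfold q. pose proof (pos_INR (code k j)). lra. Qed.

Lemma mod_S j k : ((S (j mod k)) mod k = (S j) mod k)%nat.
Proof. replace (S (j mod k)) with (j mod k + 1)%nat by lia. replace (S j) with (j + 1)%nat by lia.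
  apply Nat.Div0.add_mod_idemp_l. Qed.

Lemma key (P T : nat -> Prop) (h : R -> R) :
  injective h -> (forall x y, Arel P x y -> Arel T (h x) (h y)) ->
  forall k, P k -> (2 <= k)%nat -> T k.
Proof.
  intros Hinj Hom k Pk Hk.
  set (w := fun j => h (q k (j mod k))).
  assert (Ew : forall j, Arel T (w j) (w (S j))).
  { intro j. unfold w. apply Hom. right. exists k, (j mod k). split; [exact Pk|]. split; [exact Hk|].
    split; [apply Nat.mod_upper_bound; lia|]. split; [reflexivity|].
    rewrite mod_S. reflexivity. }
  assert (Per : w k = w 0%nat).
  { unfold w. rewrite Nat.Div0.mod_same, Nat.Div0.mod_0_l. reflexivity. }
  assert (Neg : forall j, w j < 0).
  { intro j. destruct (Rlt_or_le (w j) 0) as [L|L]; auto. exfalso.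
    assert (Inc : forall i, 0 <= w (j + i)%nat /\ w j <= w (j + i)%nat /\ ((0 < i)%nat -> w j < w (j + i)%nat)).
    { induction i as [|i IH].
      - rewrite Nat.add_0_r. repeat split; try lra. lia.
      - destruct IH as [I1 [I2 I3]].
        destruct (Ew (j + i)%nat) as [[E1 E2]|[k' [j' [_ [_ [Hj' [E1 _]]]]]]].
        + rewrite Nat.add_succ_r. split; [lra|]. split; [lra|].
          intros _. destruct (Nat.eq_dec i 0) as [->|ne]. rewrite Nat.add_0_r in *; lra.
          assert (w j < w (j + i)%nat) by (apply I3; lia). lra.
        + pose proof (q_neg k' j'). lra. }
    assert (Pj : w (j + k)%nat = w j).
    { unfold w. f_equal. f_equal. rewrite Nat.Div0.add_mod, Nat.Div0.mod_same, Nat.add_0_r. apply Nat.Div0.mod_mod. }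
    destruct (Inc k) as [_ [_ I3]]. specialize (I3 ltac:(lia)). lra. }
  assert (Cy : forall j, cyc T (w j) (w (S j))).
  { intro j. destruct (Ew j) as [[E1 _]|C]; [|exact C]. exfalso. pose proof (Neg j). lra. }
  destruct (Cy 0%nat) as [m [a [Tm [Hm [Ha [E0 _]]]]]].
  assert (Iter : forall j, w j = q m ((a + j) mod m)).
  { induction j as [|j IH].
    - rewrite Nat.add_0_r, Nat.mod_small by lia. exact E0.
    - destruct (Cy j) as [m' [a' [_ [Hm' [Ha' [E1 E2]]]]]].
      rewrite IH in E1. apply q_inj in E1; [|apply Nat.mod_upper_bound; lia|lia].
      destruct E1 as [<- <-]. rewrite E2. f_equal.
      rewrite mod_S. rewrite <- Nat.add_succ_r. reflexivity. }
  assert (Hkm : (k <= m)%nat).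
  { destruct (Nat.le_gt_cases k m) as [L|L]; auto. exfalso.
    assert (E : w m = w 0%nat) by (rewrite !Iter, Nat.add_0_r, Nat.Div0.add_mod, Nat.Div0.mod_same, Nat.add_0_r, !Nat.Div0.mod_mod; reflexivity).
    unfold w in E. apply Hinj in E. rewrite Nat.Div0.mod_0_l, Nat.mod_small in E by lia.
    apply q_inj in E; lia. }
  assert (Hdiv : ((a + k) mod m = a)%nat).
  { rewrite Iter, (Iter 0%nat), Nat.add_0_r in Per.
    apply q_inj in Per; try lia. destruct Per as [_ Per]. rewrite Per. apply Nat.mod_small; lia.
    apply Nat.mod_upper_bound; lia. apply Nat.mod_upper_bound; lia. }
  assert (k = m).
  { pose proof (Nat.div_mod (a + k) m ltac:(lia)) as D. rewrite Hdiv in D.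
    destruct ((a + k) / m)%nat as [|t] eqn:Et.
    - rewrite Nat.mul_0_r in D. lia.
    - assert (m <= m * S t)%nat by (rewrite Nat.mul_succ_r; lia). lia. }
  subst; auto.
Qed.

Lemma cantor (F : (nat -> bool) -> nat) : injective F -> False.
Proof.
  intro HF.
  set (u := fun n => epsilon (inhabits (fun _ : nat => false)) (fun f => F f = n)).
  assert (Hu : forall f, u (F f) = f).
  { intro f. apply HF. unfold u. apply (epsilon_spec (inhabits (fun _ : nat => false)) (fun g => F g = F f)).
    exists f; reflexivity. }
  set (d := fun k => negb (u k k)).
  assert (E : d (F d) = negb (d (F d))).
  { unfold d at 1. rewrite Hu. reflexivity. }
  destruct (d (F d)); discriminate.
Qed.

Fixpoint Sp (b : nat -> bool) (n : nat) : R :=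
  match n with
  | O => 0
  | S n => Sp b n + (if b n then 1 else 0) * (/3) ^ n
  end.

Lemma pow3_pos n : 0 < (/3) ^ n.
Proof. apply pow_lt; lra. Qed.

Lemma Sp_mono b n m : (n <= m)%nat -> Sp b n <= Sp b m.
Proof.
  induction 1; [lra|]. simpl. pose proof (pow3_pos m). destruct (b m); lra.
Qed.

Lemma Sp_tail b m n : (m <= n)%nat -> Sp b n + 3/2 * (/3)^n <= Sp b m + 3/2 * (/3)^m.
Proof.
  induction 1; [lra|]. simpl. pose proof (pow3_pos m0). destruct (b m0); lra.
Qed.

Definition SE (b : nat -> bool) (x : R) : Prop := exists n, x = Sp b n.

Lemma SE_bound b : bound (SE b).
Proof.
  exists (3/2). intros x [n ->]. pose proof (Sp_tail b 0 n ltac:(lia)). simpl in H.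
  pose proof (pow3_pos n). lra.
Qed.

Definition Phi (b : nat -> bool) : R :=
  proj1_sig (completeness (SE b) (SE_bound b) (ex_intro _ 0 (ex_intro _ 0%nat eq_refl))).

Lemma Phi_ge b n : Sp b n <= Phi b.
Proof.
  unfold Phi. destruct completeness as [l [H1 H2]]. simpl. apply H1. exists n; reflexivity.
Qed.

Lemma Phi_le b m : Phi b <= Sp b m + 3/2 * (/3)^m.
Proof.
  unfold Phi. destruct completeness as [l [H1 H2]]. simpl. apply H2.
  intros x [n ->]. destruct (Nat.le_gt_cases n m).
  - pose proof (Sp_mono b n m H). pose proof (pow3_pos m). lra.
  - pose proof (Sp_tail b m n ltac:(lia)). pose proof (pow3_pos n). lra.
Qed.

Lemma Phi_nonneg b : 0 <= Phi b.
Proof. apply (Phi_ge b 0). Qed.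

Lemma Phi_sep b b' k : (forall i, (i < k)%nat -> b i = b' i) -> b k = true -> b' k = false ->
  Phi b' < Phi b.
Proof.
  intros Hi Hb Hb'.
  assert (Eq : forall n, (n <= k)%nat -> Sp b n = Sp b' n).
  { induction n; intros Hn; simpl; auto. rewrite IHn by lia. rewrite Hi by lia. reflexivity. }
  pose proof (Phi_ge b (S k)) as G. pose proof (Phi_le b' (S k)) as L.
  simpl in G, L. rewrite Hb in G. rewrite Hb' in L. rewrite Eq in G by lia.
  pose proof (pow3_pos k). lra.
Qed.

Lemma least_ex (Q : nat -> Prop) n : Q n -> exists k, Q k /\ forall i, (i < k)%nat -> ~ Q i.
Proof.
  induction n as [n IH] using (well_founded_induction Wf_nat.lt_wf). intro Qn.
  destruct (classic (exists i, (i < n)%nat /\ Q i)) as [[i [Hi Qi]]|N].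
  - exact (IH i Hi Qi).
  - exists n. split; auto. intros i Hi Qi. apply N. eauto.
Qed.

Lemma Phi_inj : injective Phi.
Proof.
  intros b b' E. apply functional_extensionality. intro x.
  apply NNPP. intro Nx.
  destruct (least_ex (fun k => b k <> b' k) x Nx) as [k [Hk Hl]].
  assert (Hi : forall i, (i < k)%nat -> b i = b' i).
  { intros i Hi. apply NNPP. apply Hl; auto. }
  destruct (b k) eqn:Bk; destruct (b' k) eqn:Bk'; try congruence.
  - pose proof (Phi_sep b b' k Hi Bk Bk'). lra.
  - assert (Hi' : forall i, (i < k)%nat -> b' i = b i) by (intros; symmetry; auto).
    pose proof (Phi_sep b' b k Hi' Bk' Bk). lra.
Qed.

Lemma chrom (P : nat -> Prop) : uncountable_borel_chromatic (PR P).
Proof.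
  intros Y c [g Hg] _. simpl in c |- *.
  apply NNPP. intro N.
  apply (cantor (fun b => g (c (Phi b)))).
  intros b b' E. apply Hg in E. apply Phi_inj.
  destruct (Rtotal_order (Phi b) (Phi b')) as [L|[L|L]]; auto; exfalso; apply N.
  - exists (Phi b), (Phi b'). split; auto. left. split; auto. apply Phi_nonneg.
  - exists (Phi b'), (Phi b). split; auto. left. split; auto. apply Phi_nonneg.
Qed.

Lemma abs_lt x y e : Rabs (x - y) < e -> x - e < y /\ y < x + e.
Proof. intro H. apply Rabs_def2 in H. lra. Qed.

Lemma closed_or (F G : R -> R -> Prop) :
  @is_closed2 RP F -> @is_closed2 RP G -> @is_closed2 RP (fun a b => F a b \/ G a b).
Proof.
  unfold is_closed2, is_open2. intros HF HG x1 x2 N.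
  destruct (HF x1 x2 ltac:(tauto)) as [e1 [He1 H1]].
  destruct (HG x1 x2 ltac:(tauto)) as [e2 [He2 H2]].
  exists (Rmin e1 e2). split. apply Rmin_glb_lt; auto.
  intros y1 y2 D1 D2 [C|C].
  - apply (H1 y1 y2); auto; eapply Rlt_le_trans; eauto; apply Rmin_l.
  - apply (H2 y1 y2); auto; eapply Rlt_le_trans; eauto; apply Rmin_r.
Qed.

Lemma closed_sub (F : R -> R -> Prop) :
  (forall a b a' b', F a b -> F a' b' -> a = a' /\ b = b') -> @is_closed2 RP F.
Proof.
  unfold is_closed2, is_open2. intros HF x1 x2 N.
  destruct (classic (exists a b, F a b)) as [[a [b Fab]]|NE].
  - destruct (Req_dec x1 a) as [E1|E1].
    + destruct (Req_dec x2 b) as [E2|E2]. { subst; contradiction. }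
      exists (Rabs (x2 - b)). split. apply Rabs_pos_lt; lra.
      intros y1 y2 _ D2 C. destruct (HF _ _ _ _ C Fab) as [_ ->].
      simpl in D2. lra.
    + exists (Rabs (x1 - a)). split. apply Rabs_pos_lt; lra.
      intros y1 y2 D1 _ C. destruct (HF _ _ _ _ C Fab) as [-> _].
      simpl in D1. lra.
  - exists 1. split; [lra|]. intros y1 y2 _ _ C. apply NE; eauto.
Qed.

Lemma closed_ord (d : R) : @is_closed2 RP (fun a b => 0 <= a /\ a + d <= b).
Proof.
  unfold is_closed2, is_open2. intros x1 x2 N. simpl.
  destruct (Rlt_or_le x1 0) as [L|L].
  - exists (- x1). split; [lra|]. intros y1 y2 D1 _ [C _]. apply abs_lt in D1. lra.
  - assert (x2 < x1 + d) by (destruct (Rlt_or_le x2 (x1 + d)); auto; exfalso; apply N; split; auto; lra).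
    exists ((x1 + d - x2) / 2). split; [lra|]. intros y1 y2 D1 D2 [_ C].
    apply abs_lt in D1. apply abs_lt in D2. lra.
Qed.

Definition Fn (P : nat -> Prop) (n : nat) (a b : R) : Prop :=
  (0 <= a /\ a + / INR (S n) <= b) \/
  (exists k j, P k /\ (2 <= k)%nat /\ (j < k)%nat /\ code k j = n /\ a = q k j /\ b = q k ((S j) mod k)).

Lemma sigma (P : nat -> Prop) : @Sigma02_2 RP (Arel P).
Proof.
  exists (Fn P). split.
  - intro n. apply closed_or. apply closed_ord. apply closed_sub.
    intros a b a' b' [k [j [_ [_ [Hj [Hc [-> ->]]]]]]] [k' [j' [_ [_ [Hj' [Hc' [-> ->]]]]]]].
    rewrite <- Hc' in Hc. destruct (code_inj _ _ _ _ Hj Hj' Hc) as [-> ->]. auto.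
  - intros a b. split.
    + intros [[H1 H2]|[k [j [Pk [Hk [Hj [-> ->]]]]]]].
      * destruct (archimed_cor1 (b - a) ltac:(lra)) as [N [HN HN0]].
        destruct N as [|n]; [lia|]. exists n. left. split; lra.
      * exists (code k j). right. exists k, j. repeat split; auto.
    + intros [n [[H1 H2]|[k [j [Pk [Hk [Hj [_ [-> ->]]]]]]]]].
      * left. split; auto. assert (0 < / INR (S n)) by (apply Rinv_0_lt_compat, lt_0_INR; lia). lra.
      * right. exists k, j. repeat split; auto.
Qed.

Lemma digraph (P : nat -> Prop) : is_digraph (PR P).
Proof.
  intros x [[_ L]|[k [j [_ [Hk [Hj [E1 E2]]]]]]]. lra.
  rewrite E1 in E2. apply q_inj in E2; [|lia|apply Nat.mod_upper_bound; lia].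
  destruct E2 as [_ E]. destruct (Nat.eq_dec (S j) k) as [Ek|Ek].
  - rewrite Ek, Nat.Div0.mod_same in E. lia.
  - rewrite Nat.mod_small in E by lia. lia.
Qed.

Lemma goodP (P : nat -> Prop) : good (PR P).
Proof. split; [apply digraph|split; [apply sigma|apply chrom]]. Qed.

Lemma noreduce m (P T : nat -> Prop) k : P k -> (2 <= k)%nat -> ~ T k -> ~ inj_reduces m (PR P) (PR T).
Proof.
  intros Pk Hk NT [h [Hi [_ Hh]]]. apply NT. exact (key P T h Hi Hh k Pk Hk).
Qed.

Lemma reduce_sub m (P T : nat -> Prop) : (forall k, P k -> T k) -> inj_reduces m (PR P) (PR T).
Proof.
  intro HPT. exists (fun x => x). split; [intros x y E; exact E|]. split.
  - destruct m; intros U HU; [exact HU|]. apply borel_open. exact HU.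
  - intros x x' [H|[k [j [Pk R]]]]; [left; exact H|right; exists k, j; auto].
Qed.

Definition Fam (i : nat -> bool) (n : nat) : Prop :=
  exists k, n = (2 * k + 3 + (if i k then 1 else 0))%nat.

Definition Chn (n k : nat) : Prop := (2 <= k <= n + 2)%nat.

Theorem theorem1p4 : forall m : redmode,
  (exists F : (nat -> bool) -> PRel,
      (forall i, good (F i)) /\
      (forall i j, i <> j -> ~ inj_reduces m (F i) (F j) /\ ~ inj_reduces m (F j) (F i)))
  /\
  (exists G : nat -> PRel,
      (forall n, good (G n)) /\
      (forall n, inj_reduces m (G n) (G (S n)) /\ ~ inj_reduces m (G (S n)) (G n))).
Proof.
  intro m. split.
  - exists (fun i => PR (Fam i)). split; [intro; apply goodP|].
    intros i j Nij.
    assert (Ex : exists k, i k <> j k).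
    { apply NNPP. intro N. apply Nij. apply functional_extensionality. intro k.
      apply NNPP. intro E. apply N. eauto. }
    destruct Ex as [k Hk].
    assert (Sep : forall i j : nat -> bool, i k <> j k -> ~ Fam j (2 * k + 3 + (if i k then 1 else 0))).
    { intros i0 j0 D [k' E]. destruct (i0 k) eqn:A1; destruct (j0 k) eqn:A2; try congruence;
      destruct (j0 k') eqn:A3; try lia;
      assert (k' = k) by lia; subst; congruence. }
    split.
    + apply (noreduce m _ _ (2 * k + 3 + (if i k then 1 else 0))); [exists k; reflexivity|lia|].
      apply Sep; auto.
    + apply (noreduce m _ _ (2 * k + 3 + (if j k then 1 else 0))); [exists k; reflexivity|lia|].
      apply Sep; auto.
  - exists (fun n => PR (Chn n)). split; [intro; apply goodP|].
    intro n. split.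
    + apply reduce_sub. unfold Chn. intros; lia.
    + apply (noreduce m _ _ (n + 3)); unfold Chn; lia.
Qed.
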